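(* Let $h$ be a non-degenerate symmetric $(0,2)$-tensor field and $J_1,J_2$ $h$-symmetric $(1,1)$-tensor fields on a smooth manifold $M$, let $H_1,H_2:T^*M\to TM$ be bundle morphisms, and define $\hat J_i(X+\eta)=J_iX+H_i\eta+h(X)-J_i^*\eta$, $i=1,2$, on $TM\oplus T^*M$. Then $\hat J_1\hat J_2=-\hat J_2\hat J_1$ if and only if $J_1J_2+J_2J_1=-(H_1+H_2)h$, $J_1^*J_2^*+J_2^*J_1^*=-h(H_1+H_2)$, and $J_1H_2-H_2J_1^*=H_1J_2^*-J_2H_1$.
   Context: $h$ is viewed as the isomorphism $TM\to T^*M$, $X\mapsto h(X,\cdot)$; $(J^*\eta)(X)=\eta(JX)$; $J$ is $h$-symmetric if $h(JX,Y)=h(X,JY)$. Compositions such as $(H_1+H_2)h$ are compositions of bundle maps. *)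

(* Defs.v *)
From HB Require Import structures.
From mathcomp Require Import all_boot all_order all_algebra.
Set Implicit Arguments. Unset Strict Implicit. Unset Printing Implicit Defensive.
Import Order.TTheory GRing.Theory Num.Theory.
Local Open Scope ring_scope.

(* At a point of M, TM is modelled by column
   vectors 'cV_n (coordinates in a local frame) and T*M by column vectors of
   dual coordinates, a covector xi acting by xi(Y) = xi^T *m Y.
   - h : 'M_n is the Gram matrix, h(X,Y) = X^T h Y; as a map TM -> T*M,
     X |-> h(X,.) has coordinates h *m X (h symmetric).
   - J : 'M_n endomorphism of TM; J^* eta = eta o J has coordinates J^T *m eta.
   - H : 'M_n a morphism T*M -> TM.
   On TM (+) T*M = 'cV_(n+n) (X on top, eta below), hat J is the block
   matrix [[J, H], [h, -J^T]]. *)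

Definition bil (R : ringType) (n : nat) (h : 'M[R]_n) (X Y : 'cV[R]_n) : 'M[R]_1 :=
  X^T *m h *m Y.

Definition h_symmetric (R : ringType) (n : nat) (h J : 'M[R]_n) : Prop :=
  forall X Y : 'cV[R]_n, bil h (J *m X) Y = bil h X (J *m Y).

Definition dualmx (R : ringType) (n : nat) (J : 'M[R]_n) : 'M[R]_n := J^T.

Definition hatJ (R : ringType) (n : nat) (h J H : 'M[R]_n) : 'M[R]_(n + n) :=
  block_mx J H h (- dualmx J).

(* Main.v *)
Require Import Defs.
From HB Require Import structures.
From mathcomp Require Import all_boot all_order all_algebra.
Import Order.TTheory GRing.Theory Num.Theory.
Local Open Scope ring_scope.

Lemma hsym_tr {R : realFieldType} {n : nat} {h J : 'M[R]_n} :
  h_symmetric h J -> J^T *m h = h *m J.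
Proof.
move=> HJ; apply/matrixP => i j.
have := HJ (delta_mx i 0) (delta_mx j 0).
rewrite /bil trmx_mul !trmx_delta.
rewrite !mulmxA -(mulmxA _ J^T h) -(mulmxA _ h J) -!rowE -!colE => /matrixP /(_ 0 0).
by rewrite !mxE.
Qed.

Lemma zL1 {V : zmodType} (a b c d : V) : (a + b = -(c + d)) <-> (a + c = -(b + d)).
Proof.
split=> /eqP; rewrite -addr_eq0 => /eqP E; apply/eqP; rewrite -addr_eq0;
  apply/eqP; by rewrite -E addrACA.
Qed.

Lemma zL2 {V : zmodType} (a b c d : V) : (a - b = -(c - d)) <-> (a - d = b - c).
Proof.
suff e : (a - b == -(c - d)) = (a - d == b - c).
  by split=> /eqP H; apply/eqP; [rewrite -e | rewrite e].
rewrite -addr_eq0 -[RHS]subr_eq0; congr (_ == 0).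
by rewrite opprB addrACA [RHS]addrACA [- d - b]addrC.
Qed.

Lemma zL3 {V : zmodType} (a b c d : V) : (a + b = -(c + d)) <-> (b + d = -(c + a)).
Proof.
suff e : (a + b == -(c + d)) = (b + d == -(c + a)).
  by split=> /eqP H; apply/eqP; [rewrite -e | rewrite e].
rewrite -addr_eq0 -[RHS]addr_eq0; congr (_ == 0).
by rewrite addrACA [RHS]addrC [c + a]addrC.
Qed.

Theorem proposition3p12 (R : realFieldType) (n : nat) (h J1 J2 H1 H2 : 'M[R]_n) :
  h^T = h -> h \in unitmx ->
  h_symmetric h J1 -> h_symmetric h J2 ->
  (hatJ h J1 H1 *m hatJ h J2 H2 = - (hatJ h J2 H2 *m hatJ h J1 H1)) <->
  [/\ J1 *m J2 + J2 *m J1 = - ((H1 + H2) *m h),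
      dualmx J1 *m dualmx J2 + dualmx J2 *m dualmx J1 = - (h *m (H1 + H2)) &
      J1 *m H2 - H2 *m dualmx J1 = H1 *m dualmx J2 - J2 *m H1].
Proof.
move=> hT hU s1 s2.
rewrite /hatJ /dualmx !mulmx_block opp_block_mx !mulmxN !mulNmx !opprK.
rewrite (hsym_tr s1) (hsym_tr s2) mulmxDl mulmxDr.
have LL : h *m J2 - h *m J1 = - (h *m J1 - h *m J2) by rewrite opprB.
have E1 := zL1 (J1 *m J2) (H1 *m h) (J2 *m J1) (H2 *m h).
have E2 := zL2 (J1 *m H2) (H1 *m J2^T) (J2 *m H1) (H2 *m J1^T).
have E3 := zL3 (h *m H2) (J1^T *m J2^T) (h *m H1) (J2^T *m J1^T).
split.
- move/eq_block_mx => [a b _ d]; split.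
  + by apply/E1.
  + by apply/E3.
  + by apply/E2.
- case=> a d b; congr block_mx.
  + by apply/E1.
  + by apply/E2.
  + exact: LL.
  + by apply/E3.
Qed.
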